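(* Let $(a_i)_{i\ge0}$ be positive integers with $a_{2k}=1$ for all $k\geq0$ (the $a_{2k+1}$ arbitrary positive integers). Let $\ell$ be the irrational number with simple continued fraction $[a_0;a_1,a_2,\dots]$ and set $\theta=e^{2/\ell}$. Then $\mathcal A_\theta=\emptyset$. In particular, for every positive integer $c$, if $\theta=e^{-c+\sqrt{c(c+4)}}$ then $\mathcal A_\theta=\emptyset$.
   Context: $\lfloor x\rfloor$ is the floor of $x$; $\log$ is the natural logarithm. For real $\theta>1$ and positive integer $n$, $M'_\theta(n)=\left\lfloor 1/(\theta^{1/n}-1)\right\rfloor$, and $\mathcal A_\theta=\{n\in\mathbb N: M'_\theta(n)\neq \lfloor n/\log\theta-1/2\rfloor\}$, where $\mathbb N$ is the set of positive integers. $[a_0;a_1,a_2,\dots]$ denotes an infinite simple continued fraction. *)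

(* Defs.v *)
From Stdlib Require Import Reals ZArith.
Open Scope R_scope.

(* floor of a real number: up x is the unique integer with x < up x <= x + 1 *)
Definition Rfloor (x : R) : Z := (up x - 1)%Z.

Definition Mprime (theta : R) (n : nat) : Z :=
  Rfloor (/ (Rpower theta (/ INR n) - 1)).

Definition in_A (theta : R) (n : nat) : Prop :=
  (0 < n)%nat /\ Mprime theta n <> Rfloor (INR n / ln theta - / 2).

(* finite continued fraction [a_k; a_{k+1}, ..., a_{k+n}] *)
Fixpoint cf_fin (a : nat -> nat) (k n : nat) : R :=
  match n with
  | O => INR (a k)
  | S m => INR (a k) + / cf_fin a (S k) m
  end.

Definition cf_value (a : nat -> nat) (l : R) : Prop :=
  Un_cv (fun n => cf_fin a 0 n) l.

(* Main.v *)
Require Import Defs.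
From Stdlib Require Import Reals ZArith.
From Coquelicot Require Import Coquelicot.
From Stdlib Require Import Lra Lia Psatz.
Open Scope R_scope.
Lemma pos_from_deriv (f df : R -> R) :
  f 0 = 0 -> (forall x, 0 <= x -> is_derive f x (df x)) ->
  (forall x, 0 < x -> 0 < df x) -> forall x, 0 < x -> 0 < f x.
Proof.
  intros H0 Hd Hp x Hx.
  destruct (MVT_cor2 f df 0 x Hx) as [c [Hc1 Hc2]].
  { intros c Hc. apply is_derive_Reals. apply Hd. lra. }
  assert (0 < df c) by (apply Hp; lra).
  rewrite H0 in Hc1. nra.
Qed.

Lemma ineq_up x : 0 < x -> 12 * x < (exp x - 1) * (x*x - 6*x + 12).
Proof.
  intros Hx.
  assert (H3 : forall x, 0 < x -> 0 < exp x * (x*x)).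
  { intros t Ht. apply Rmult_lt_0_compat. apply exp_pos. nra. }
  assert (H2 : forall x, 0 < x -> 0 < exp x * (x*x - 2*x + 2) - 2).
  { apply (pos_from_deriv _ (fun x => exp x * (x*x))).
    - rewrite exp_0. ring.
    - intros t _. auto_derive; auto. ring.
    - exact H3. }
  assert (H1 : forall x, 0 < x -> 0 < exp x * (x*x - 4*x + 6) - 2*x - 6).
  { apply (pos_from_deriv _ (fun x => exp x * (x*x - 2*x + 2) - 2)).
    - rewrite exp_0. ring.
    - intros t _. auto_derive; auto. ring.
    - exact H2. }
  assert (H : forall x, 0 < x -> 0 < (exp x - 1) * (x*x - 6*x + 12) - 12 * x).
  { apply (pos_from_deriv _ (fun x => exp x * (x*x - 4*x + 6) - 2*x - 6)).
    - rewrite exp_0. ring.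
    - intros t _. auto_derive; auto. ring.
    - exact H1. }
  specialize (H x Hx). lra.
Qed.

Lemma ineq_low x : 0 < x -> (2 - x) * exp x < 2 + x.
Proof.
  intros Hx.
  assert (H1 : forall x, 0 < x -> 0 < 1 - (1 - x) * exp x).
  { apply (pos_from_deriv _ (fun x => x * exp x)).
    - rewrite exp_0. ring.
    - intros t _. auto_derive; auto. ring.
    - intros t Ht. apply Rmult_lt_0_compat; auto. apply exp_pos. }
  assert (H : forall x, 0 < x -> 0 < (2 + x) - (2 - x) * exp x).
  { apply (pos_from_deriv _ (fun x => 1 - (1 - x) * exp x)).
    - rewrite exp_0. ring.
    - intros t _. auto_derive; auto. ring.
    - exact H1. }
  specialize (H x Hx). lra.
Qed.

Lemma bounds x : 0 < x -> /x - /2 < /(exp x - 1) /\ /(exp x - 1) < /x - /2 + x/12.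
Proof.
  intros Hx.
  assert (He : 1 < exp x). { rewrite <- exp_0. apply exp_increasing. lra. }
  pose proof (ineq_up x Hx). pose proof (ineq_low x Hx).
  set (E := exp x) in *.
  assert (0 < E - 1) by lra.
  split.
  - assert (Hid : /(E-1) - (/x - /2) = (2*x - (2-x)*(E-1)) / (2*x*(E-1))) by (field; lra).
    assert (0 < (2*x - (2-x)*(E-1)) / (2*x*(E-1))).
    { apply Rdiv_lt_0_compat; nra. }
    lra.
  - assert (Hid : (/x - /2 + x/12) - /(E-1) = ((E-1)*(x*x - 6*x + 12) - 12*x) / (12*x*(E-1))) by (field; lra).
    assert (0 < ((E-1)*(x*x - 6*x + 12) - 12*x) / (12*x*(E-1))).
    { apply Rdiv_lt_0_compat; nra. }
    lra.
Qed.
Definition Good (x:R) := forall (q:nat) (p:Z), (1 <= q)%nat ->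
  INR q * x < IZR p -> 1/3 <= INR q * (IZR p - INR q * x).

Lemma step (a:nat) (y:R) (q:nat) (p:Z) : (1<=a)%nat -> 0<y<=2 -> (1<=q)%nat ->
  (forall (s:nat) (r:Z), (1<=s)%nat -> (s<q)%nat -> INR s * y < IZR r ->
      1/3 <= INR s*(IZR r - INR s*y)) ->
  INR q * (1 + /(INR a + /y)) < IZR p ->
  1/3 <= INR q * (IZR p - INR q * (1 + /(INR a + /y))).
Proof.
  intros Ha Hy Hq IH Hp.
  assert (HA : 1 <= INR a) by (apply (le_INR 1); lia).
  assert (HQ : 1 <= INR q) by (apply (le_INR 1); lia).
  set (A := INR a) in *. set (Q := INR q) in *.
  set (u := /y) in *.
  assert (Hu : y * u = 1) by (unfold u; field; lra).
  assert (Hu2 : 1/2 <= u).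
  { apply (Rmult_le_reg_l y); lra. }
  set (b := /(A + u)) in *.
  assert (Hb : (A + u) * b = 1) by (unfold b; field; lra).
  assert (Hb0 : 0 < b) by (unfold b; apply Rinv_0_lt_compat; lra).
  set (r := (p - Z.of_nat q)%Z).
  assert (Hr : IZR r = IZR p - Q) by (unfold r; rewrite minus_IZR, <- INR_IZR_INZ; reflexivity).
  assert (Hr1 : (1 <= r)%Z).
  { assert (0 < Q * b) by (apply Rmult_lt_0_compat; lra).
    assert (0 < IZR r) by (rewrite Hr; nra).
    assert (0 < r)%Z by (apply lt_IZR; lra). lia. }
  assert (HR : 1 <= IZR r) by (apply IZR_le; lia).
  set (s := (Z.of_nat q - r * Z.of_nat a)%Z).
  assert (Hs : IZR s = Q - IZR r * A) by
    (unfold s; rewrite minus_IZR, mult_IZR, <- !INR_IZR_INZ; reflexivity).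
  replace (IZR p - Q * (1 + b)) with (IZR r - Q * b) by lra.
  set (R' := IZR r) in *.
  destruct (Z_le_gt_dec s 0) as [Hs0 | Hs0].
  -
    apply IZR_le in Hs0. rewrite Hs in Hs0.
    assert (HRA : Q <= R' * A) by lra.
    assert (Hf1 : 1/3 <= R' - b).
    { assert (b <= 2/3).
      { apply (Rmult_le_reg_l (A+u)); lra. }
      lra. }
    assert (HfR : 1/3 <= R' * A * (R' - R' * A * b)).
    { assert (E : 1 - A * b = u * b) by nra.
      replace (R' * A * (R' - R' * A * b)) with (R'*R' * (A * u * b)) by
        (replace (R' - R' * A * b) with (R' * (1 - A*b)) by ring; rewrite E; ring).
      assert (1/3 <= A * u * b).
      { apply (Rmult_le_reg_l (A+u)); try lra.
        replace ((A + u) * (A * u * b)) with (A * u * ((A+u)*b)) by ring.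
        rewrite Hb. nra. }
      assert (1 <= R' * R') by nra. nra. }
    destruct (Req_dec (R' * A) 1) as [E1|E1].
    + assert (Q = 1) by lra. subst Q. rewrite H. lra.
    + assert (HRA1 : 1 < R' * A) by nra.
      set (M := R' * A) in *.
      assert (Hid : (M - 1) * (Q * (R' - Q * b) - 1/3) =
        (M - Q) * (R' - b - 1/3) + (Q - 1) * (M * (R' - M * b) - 1/3)
        + (M - 1) * (Q - 1) * (M - Q) * b) by ring.
      assert (0 <= (M - Q) * (R' - b - 1/3)) by nra.
      assert (0 <= (Q - 1) * (M * (R' - M * b) - 1/3)) by nra.
      assert (0 <= (M - 1) * (Q - 1) * (M - Q) * b).
      { apply Rmult_le_pos; [|lra]. apply Rmult_le_pos; [|lra]. nra. }
      nra.
  -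
    assert (Hsn : IZR s = INR (Z.to_nat s)) by (rewrite INR_IZR_INZ, Z2Nat.id; [reflexivity|lia]).
    assert (HsA : 1 <= IZR s) by (apply IZR_le; lia).
    assert (Hpos : 0 < R' - Q * b) by nra.
    assert (Hk : (A + u) * (R' - Q * b) = R' * u - IZR s).
    { rewrite Hs. replace ((A + u) * (R' - Q * b)) with ((A+u)*R' - Q * ((A+u)*b)) by ring.
      rewrite Hb. ring. }
    assert (Hrs : IZR s * y < R').
    { assert (0 < R' * u - IZR s) by nra.
      apply (Rmult_lt_reg_r u). lra. replace (IZR s * y * u) with (IZR s * (y*u)) by ring. nra. }
    assert (Hlt : (Z.to_nat s < q)%nat).
    { apply INR_lt. rewrite <- Hsn. fold Q. nra. }
    pose proof (IH (Z.to_nat s) r ltac:(lia) Hlt ltac:(rewrite <- Hsn; exact Hrs)) as IH'.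
    rewrite <- Hsn in IH'. fold R' in IH'.
    assert (Hk2 : (A * y + 1) * (R' - Q * b) = R' - IZR s * y).
    { replace (A * y + 1) with (y * (A + u)) by (rewrite <- Hu; ring).
      rewrite Rmult_assoc, Hk. replace (y * (R' * u - IZR s)) with (R' * (y*u) - IZR s * y) by ring.
      rewrite Hu. ring. }
    assert (HQs : Q = IZR s + R' * A) by lra.
    assert (Hm : (A*y+1) * (1/3) <= (A * y + 1) * (Q * (R' - Q * b))).
    { replace ((A * y + 1) * (Q * (R' - Q * b))) with (Q * (R' - IZR s * y)) by (rewrite <- Hk2; ring).
      assert ((A*y+1) * (1/3) <= (A*y+1) * (IZR s * (R' - IZR s * y))).
      { apply Rmult_le_compat_l; nra. }
      assert (IZR s * A * y <= R' * A) by nra.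
      nra. }
    apply Rmult_le_reg_l in Hm; nra.
Qed.

Lemma Good1 : Good 1.
Proof.
  intros q p Hq Hp. rewrite Rmult_1_r in *.
  rewrite INR_IZR_INZ in *. apply lt_IZR in Hp.
  assert (H : (1 <= p - Z.of_nat q)%Z) by lia. apply IZR_le in H.
  rewrite minus_IZR in H.
  assert (H2 : (1 <= Z.of_nat q)%Z) by lia. apply IZR_le in H2. nra.
Qed.

Lemma cf_good a : (forall i, (0 < a i)%nat) -> (forall k, a (2 * k)%nat = 1%nat) ->
  forall m k, 1 <= cf_fin a (2*k) (2*m) <= 2 /\ Good (cf_fin a (2*k) (2*m)).
Proof.
  intros Hpos Hev m. induction m as [|m IH]; intros k.
  - replace (2*0)%nat with 0%nat by lia. cbn [cf_fin]. rewrite Hev. simpl. split; [lra|]. replace (1+0) with 1 by ring. exact Good1.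
  - replace (2 * S m)%nat with (S (S (2*m))) by lia.
    cbn [cf_fin]. rewrite Hev.
    replace (S (S (2*k))) with (2 * S k)%nat by lia.
    destruct (IH (S k)) as [[Hy1 Hy2] Hg].
    set (y := cf_fin a (2 * S k) (2 * m)) in *.
    assert (HA : 1 <= INR (a (S (2*k)))) by (apply (le_INR 1); apply Hpos).
    set (A := INR (a (S (2*k)))) in *.
    assert (Hb : 0 < / (A + / y) <= 1).
    { assert (1/2 <= /y).
      { apply (Rmult_le_reg_l y); try lra. rewrite Rinv_r; lra. }
      split. apply Rinv_0_lt_compat; lra.
      rewrite <- Rinv_1. apply Rinv_le_contravar; lra. }
    simpl INR. split; [lra|].
    intros q p Hq Hp. apply step; [apply Hpos|lra|exact Hq| |exact Hp].
    intros s r Hs _ Hr. apply Hg; auto.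
Qed.

Lemma limit_good a l : (forall i, (0 < a i)%nat) -> (forall k, a (2 * k)%nat = 1%nat) ->
  cf_value a l -> 1 <= l /\ Good l.
Proof.
  intros Hpos Hev Hcv.
  assert (Hc : forall m, 1 <= cf_fin a 0 (2*m) <= 2 /\ Good (cf_fin a 0 (2*m))).
  { intros m. exact (cf_good a Hpos Hev m 0). }
  split.
  - destruct (Rle_lt_dec 1 l) as [H|H]; auto.
    destruct (Hcv (1 - l)) as [N HN]; [lra|].
    specialize (HN (2*N)%nat ltac:(lia)). destruct (Hc N) as [[H1 _] _].
    unfold R_dist in HN. apply Rabs_def2 in HN. lra.
  - intros q p Hq Hp.
    destruct (Rle_lt_dec (1/3) (INR q * (IZR p - INR q * l))) as [H|H]; auto.
    exfalso.
    assert (HQ : 1 <= INR q) by (apply (le_INR 1); lia).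
    set (Q := INR q) in *. set (P := IZR p) in *.
    set (eps := Rmin ((P - Q * l)/Q) ((1/3 - Q * (P - Q*l))/(Q*Q))).
    assert (Heps : 0 < eps).
    { unfold eps. apply Rmin_pos; apply Rdiv_lt_0_compat; nra. }
    destruct (Hcv eps Heps) as [N HN].
    specialize (HN (2*N)%nat ltac:(lia)). destruct (Hc N) as [_ Hg].
    unfold R_dist in HN. apply Rabs_def2 in HN.
    set (c := cf_fin a 0 (2*N)) in *.
    assert (E1 : eps * Q <= P - Q * l).
    { assert (eps <= (P - Q * l)/Q) by apply Rmin_l.
      apply (Rmult_le_compat_r Q) in H0; [|lra]. unfold Rdiv in H0.
      rewrite Rmult_assoc, Rinv_l in H0; lra. }
    assert (E2 : eps * (Q*Q) <= 1/3 - Q * (P - Q*l)).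
    { assert (eps <= (1/3 - Q * (P - Q*l))/(Q*Q)) by apply Rmin_r.
      apply (Rmult_le_compat_r (Q*Q)) in H0; [|nra]. unfold Rdiv in H0.
      rewrite Rmult_assoc, Rinv_l in H0; nra. }
    assert (Hd : Q * (c - l) < Q * eps) by (apply Rmult_lt_compat_l; lra).
    assert (Hd2 : Q * Q * (c - l) < Q * Q * eps) by (apply Rmult_lt_compat_l; nra).
    assert (Q * c < P) by nra.
    specialize (Hg q p Hq H0). fold Q P c in Hg. nra.
Qed.

Lemma mainA l : 1 <= l -> Good l -> forall n, ~ in_A (exp (2/l)) n.
Proof.
  intros Hl Hg n [Hn Hne]. apply Hne. unfold Mprime, Rpower. rewrite ln_exp.
  assert (HN : 1 <= INR n) by (apply (le_INR 1); lia).
  set (N := INR n) in *.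
  set (x := / N * (2 / l)).
  assert (Hx : 0 < x).
  { unfold x. apply Rmult_lt_0_compat. apply Rinv_0_lt_compat; lra.
    apply Rdiv_lt_0_compat; lra. }
  assert (Hix : / x = N * l / 2) by (unfold x; field; lra).
  assert (HG : N / (2 / l) - / 2 = / x - / 2) by (rewrite Hix; field; lra).
  rewrite HG.
  destruct (bounds x Hx) as [B1 B2].
  set (G := / x - / 2) in *. set (F := / (exp x - 1)) in *.
  unfold Rfloor.
  destruct (archimed G) as [A1 A2].
  set (K := (up G - 1)%Z).
  assert (HK : IZR K <= G) by (unfold K; rewrite minus_IZR; lra).
  assert (HK2 : G < IZR K + 1) by (unfold K; rewrite minus_IZR; lra).
  assert (HF : F < IZR (K + 1)).
  { destruct (Rlt_le_dec F (IZR (K+1))) as [H|H]; auto. exfalso.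
    set (M := (K + 1)%Z) in *.
    assert (HM : G < IZR M) by (unfold M; rewrite plus_IZR; lra).
    set (p := (2 * M + 1)%Z).
    assert (Hp : IZR p = 2 * IZR M + 1) by (unfold p; rewrite plus_IZR, mult_IZR; ring).
    assert (HGe : G = N * l / 2 - / 2) by (unfold G; rewrite Hix; reflexivity).
    assert (Hlt : N * l < IZR p) by lra.
    specialize (Hg n p ltac:(lia) Hlt). fold N in Hg.
    assert (Hs : IZR p - N * l < x / 6) by lra.
    assert (HNx : N * x = 2 / l) by (unfold x; field; lra).
    assert (N * (IZR p - N * l) < N * (x/6)) by (apply Rmult_lt_compat_l; lra).
    assert (2 / l <= 2) by (apply (Rmult_le_reg_r l); [lra|]; unfold Rdiv; rewrite Rmult_assoc, Rinv_l; lra).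
    nra. }
  assert (E : (K + 1)%Z = up F) by (apply up_tech; lra).
  rewrite <- E. unfold K. lia.
Qed.

Theorem theorem5 :
  (forall (a : nat -> nat) (l : R),
      (forall i, (0 < a i)%nat) ->
      (forall k, a (2 * k)%nat = 1%nat) ->
      cf_value a l ->
      forall n : nat, ~ in_A (exp (2 / l)) n) /\
  (forall c : nat, (0 < c)%nat ->
      forall n : nat,
        ~ in_A (exp (- INR c + sqrt (INR c * (INR c + 4)))) n).
Proof.
  split.
  - intros a l Hpos Hev Hcv. destruct (limit_good a l Hpos Hev Hcv) as [H1 H2].
    apply mainA; auto.
  - intros c Hc n.
    assert (HC : 1 <= INR c) by (apply (le_INR 1); lia).
    set (C := INR c) in *.
    assert (Hw0 : 0 <= sqrt (C * (C + 4))) by apply sqrt_pos.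
    assert (Hw2 : sqrt (C * (C + 4)) * sqrt (C * (C + 4)) = C * (C + 4))
      by (apply sqrt_sqrt; nra).
    set (w := sqrt (C * (C + 4))) in *.
    set (x := - C + w).
    assert (Hxe : x * x + 2 * C * x = 4 * C) by (unfold x; nra).
    assert (Hx1 : 1 <= x) by (unfold x in *; nra).
    set (l := 2 / x).
    assert (Hlx : 2 / l = x) by (unfold l; field; lra).
    rewrite <- Hlx.
    assert (Hl1 : 1 <= l <= 2).
    { unfold l. split.
      - apply (Rmult_le_reg_r x); [lra|]. unfold Rdiv. rewrite Rmult_assoc, Rinv_l; nra.
      - apply (Rmult_le_reg_r x); [lra|]. unfold Rdiv. rewrite Rmult_assoc, Rinv_l; nra. }
    assert (Hfix : l = 1 + / (C + / l)).
    { assert (Hil : / l = x / 2) by (unfold l; field; lra).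
      rewrite Hil. unfold l.
      assert (Hd : C + x / 2 = (2 * C + x) / 2) by field.
      rewrite Hd. rewrite Rinv_div.
      apply (Rmult_eq_reg_r (x * (2 * C + x))); [|nra].
      field_simplify; try lra. }
    apply mainA; [lra|].
    assert (Hind : forall B q, (q < B)%nat -> forall p, (1 <= q)%nat -> INR q * l < IZR p ->
                   1/3 <= INR q * (IZR p - INR q * l)).
    { intros B. induction B as [|B IHB]; intros q Hq p H1 Hp; [lia|].
      rewrite Hfix in Hp |- *. apply step; [exact Hc|lra|exact H1| |exact Hp].
      intros s r Hs Hsq Hr. apply (IHB s); auto; lia. }
    intros q p Hq Hp. apply (Hind (S q) q); auto.
Qed.
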